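(* Let $n\ge 4$ and let $A$ be one of the following complex Leibniz algebras with basis $\{h_1,h_2,e_1,\dots,e_n\}$: (a) $R(F_n^1)$: nonzero products $[e_i,e_1]=e_{i+1}$ ($2\le i\le n-1$), $[e_1,h_2]=e_1$, $[h_2,e_1]=-e_1$, $[e_i,h_1]=e_i$ ($2\le i\le n$), $[e_i,h_2]=(i-1)e_i$ ($2\le i\le n$); (b) $\mathcal L_1$: nonzero products $[e_1,e_1]=e_3$, $[e_i,e_1]=e_{i+1}$ ($3\le i\le n-1$), $[e_1,h_2]=e_1$, $[h_2,e_1]=-e_1$, $[e_2,h_1]=e_2$, $[h_1,e_2]=-e_2$, $[e_i,h_2]=(i-1)e_i$ ($3\le i\le n$); (c) $\mathcal L_2$: the same products as $\mathcal L_1$ except $[h_1,e_2]=0$. Then every biderivation of $A$ is inner, i.e. of the form $(-\mathrm{ad}_x,\mathrm{Ad}_x)$ for some $x\in A$.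
   Context: Leibniz algebras are right Leibniz over $\mathbb C$: $[x,[y,z]]=[[x,y],z]-[[x,z],y]$. Unlisted products are zero. A derivation is a linear $d$ with $d([x,y])=[d(x),y]+[x,d(y)]$; an anti-derivation is a linear $D$ with $D([x,y])=[D(x),y]-[D(y),x]$; a biderivation is a pair $(d,D)$ of a derivation and an anti-derivation with $[x,d(y)]=[x,D(y)]$ for all $x,y$. For $x\in A$, $\mathrm{ad}_x(y)=[y,x]$, $\mathrm{Ad}_x(y)=[x,y]$; $(-\mathrm{ad}_x,\mathrm{Ad}_x)$ is called an inner biderivation. *)

(* Defs.v *)
(* The ground field C is taken to be the complex numbers
   R[i] = complex R over an arbitrary realType R (every realType is the
   field of real numbers up to isomorphism, so R[i] is C). *)
From HB Require Import structures.
From mathcomp Require Import all_boot all_order all_algebra.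
From mathcomp Require Import reals complex.
Set Implicit Arguments. Unset Strict Implicit. Unset Printing Implicit Defensive.
Import Order.TTheory GRing.Theory Num.Theory.
Local Open Scope ring_scope.

(* The algebra has basis {h_1, h_2, e_1, ..., e_n}, realized as row vectors
   'rV[C]_(n.+2) with the convention: position 0 = h_1, position 1 = h_2,
   position k.+1 = e_k  (1 <= k <= n). *)

Inductive which_alg := RFn1 | Lie1 | Lie2.

Section Alg.
Variable R : realType.
Local Notation C := (R[i]).

Definition bv (n p : nat) : 'rV[C]_(n.+2) := delta_mx 0 (inord p).

Definition br (A : which_alg) (n a b : nat) : 'rV[C]_(n.+2) :=
  match A with
  | RFn1 =>
      if (3 <= a <= n)%N && (b == 2)%N then bv n a.+1            (* [e_i,e_1]=e_{i+1}, 2<=i<=n-1 *)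
      else if (a == 2)%N && (b == 1)%N then bv n 2               (* [e_1,h_2]=e_1 *)
      else if (a == 1)%N && (b == 2)%N then - bv n 2             (* [h_2,e_1]=-e_1 *)
      else if (3 <= a <= n.+1)%N && (b == 0)%N then bv n a       (* [e_i,h_1]=e_i, 2<=i<=n *)
      else if (3 <= a <= n.+1)%N && (b == 1)%N
           then (a - 2)%:R *: bv n a                             (* [e_i,h_2]=(i-1)e_i *)
      else 0
  | Lie1 | Lie2 =>
      if (a == 2)%N && (b == 2)%N then bv n 4                    (* [e_1,e_1]=e_3 *)
      else if (4 <= a <= n)%N && (b == 2)%N then bv n a.+1       (* [e_i,e_1]=e_{i+1}, 3<=i<=n-1 *)
      else if (a == 2)%N && (b == 1)%N then bv n 2               (* [e_1,h_2]=e_1 *)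
      else if (a == 1)%N && (b == 2)%N then - bv n 2             (* [h_2,e_1]=-e_1 *)
      else if (a == 3)%N && (b == 0)%N then bv n 3               (* [e_2,h_1]=e_2 *)
      else if (a == 0)%N && (b == 3)%N then
             (if A is Lie1 then - bv n 3 else 0)                 (* [h_1,e_2]=-e_2 in L_1, 0 in L_2 *)
      else if (4 <= a <= n.+1)%N && (b == 1)%N
           then (a - 2)%:R *: bv n a                             (* [e_i,h_2]=(i-1)e_i, 3<=i<=n *)
      else 0
  end.

Definition bracket (A : which_alg) (n : nat) (x y : 'rV[C]_(n.+2)) : 'rV[C]_(n.+2) :=
  \sum_(i < n.+2) \sum_(j < n.+2) (x 0 i * y 0 j) *: br A n i j.

(* linear maps are matrices acting on row vectors on the right: v |-> v *m M *)
Definition is_derivation A n (d : 'M[C]_(n.+2)) : Prop :=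
  forall x y, bracket A x y *m d = bracket A (x *m d) y + bracket A x (y *m d).

Definition is_antiderivation A n (D : 'M[C]_(n.+2)) : Prop :=
  forall x y, bracket A x y *m D = bracket A (x *m D) y - bracket A (y *m D) x.

Definition is_biderivation A n (d D : 'M[C]_(n.+2)) : Prop :=
  [/\ is_derivation A d, is_antiderivation A D &
      forall x y, bracket A x (y *m d) = bracket A x (y *m D)].

(* (-ad_x, Ad_x) with ad_x(y) = [y,x], Ad_x(y) = [x,y] *)
Definition is_inner_biderivation A n (d D : 'M[C]_(n.+2)) : Prop :=
  exists x : 'rV[C]_(n.+2), forall y,
    y *m d = - bracket A y x /\ y *m D = bracket A x y.

End Alg.

(* Main.v *)
Require Import Defs.
From HB Require Import structures.
From mathcomp Require Import all_boot all_order all_algebra.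
From mathcomp Require Import reals complex.
From mathcomp Require Import zify ring.
Set Implicit Arguments. Unset Strict Implicit. Unset Printing Implicit Defensive.
Import Order.TTheory GRing.Theory Num.Theory.
Local Open Scope ring_scope.

Section Infra.
Variable R : realType.
Local Notation C := (R[i]).
Variable n : nat.
Local Notation V := 'rV[C]_(n.+2).

Definition cc (x : V) (i : nat) : C := x 0 (inord i).

Lemma ordE (i : 'I_(n.+2)) a : (a < n.+2)%N -> (i == inord a) = (i == a :> nat).
Proof. by move=> ha; rewrite -val_eqE /= inordK. Qed.

Lemma bv_entry a k : (a < n.+2)%N -> (k < n.+2)%N -> bv R n a 0 (inord k) = (a == k)%:R.
Proof. by move=> ha hk; rewrite /bv mxE /= ordE // inordK // eq_sym. Qed.

Lemma bv_cc a k : (a < n.+2)%N -> (k < n.+2)%N -> cc (bv R n a) k = (a == k)%:R.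
Proof. exact: bv_entry. Qed.

Lemma mul_cc a k (M : 'M[C]_(n.+2)) : cc (bv R n a *m M) k = M (inord a) (inord k).
Proof. by rewrite /cc /bv -rowE mxE. Qed.

Lemma bracket_cc A x y k : cc (bracket A x y) k =
  \sum_(i < n.+2) \sum_(j < n.+2) x 0 i * y 0 j * br R A n i j 0 (inord k).
Proof.
rewrite /cc /bracket summxE; apply eq_bigr => i _; rewrite summxE; apply eq_bigr=> j _.
by rewrite mxE.
Qed.

Lemma sum2_list (G : 'I_(n.+2) -> 'I_(n.+2) -> C) (P : seq ('I_(n.+2) * 'I_(n.+2))) :
  uniq P -> (forall i j, (i,j) \notin P -> G i j = 0) ->
  \sum_i \sum_j G i j = \sum_(p <- P) G p.1 p.2.
Proof.
move=> uP hz; rewrite pair_big /= (bigID (mem P)) /= [X in _ + X]big1 ?addr0.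
  by rewrite (big_uniq _ uP).
by move=> [i j] /= /negP H; apply: hz; apply/negP.
Qed.

Lemma sum2_nat (G : 'I_(n.+2) -> 'I_(n.+2) -> C) (P : seq (nat * nat)) :
  uniq P -> all (fun p => (p.1 < n.+2)%N && (p.2 < n.+2)%N) P ->
  (forall i j : 'I_(n.+2), ((i:nat), (j:nat)) \notin P -> G i j = 0) ->
  \sum_i \sum_j G i j = \sum_(p <- P) G (inord p.1) (inord p.2).
Proof.
move=> uP aP hz.
have -> : \sum_(p <- P) G (inord p.1) (inord p.2) =
   \sum_(p <- map (fun p => ((inord p.1 : 'I_(n.+2)), (inord p.2 : 'I_(n.+2)))) P) G p.1 p.2.
  by rewrite big_map.
apply: sum2_list.
  rewrite map_inj_in_uniq // => [[a b] [c e]] /(allP aP) /= /andP[ha hb]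
     /(allP aP) /= /andP[hc he] [] /(congr1 val) /= + /(congr1 val) /=.
  by rewrite !inordK // => -> ->.
move=> i j Hn; apply: hz; apply/negP => Hin; move/negP: Hn; apply.
apply/mapP; exists ((i:nat), (j:nat)) => //=.
by rewrite !inord_val.
Qed.

Lemma bracket_linl A a (u v w : V) :
  bracket A (a *: u + v) w = a *: bracket A u w + bracket A v w.
Proof.
rewrite /bracket scaler_sumr -big_split; apply eq_bigr => i _.
rewrite scaler_sumr -big_split; apply eq_bigr => j _.
by rewrite !mxE scalerA mulrDl mulrA scalerDl.
Qed.

Lemma bracket_linr A a (u v w : V) :
  bracket A w (a *: u + v) = a *: bracket A w u + bracket A w v.
Proof.
rewrite /bracket scaler_sumr -big_split; apply eq_bigr => i _.
rewrite scaler_sumr -big_split; apply eq_bigr => j _.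
by rewrite !mxE scalerA mulrDr [w 0 i * _]mulrCA scalerDl mulrA.
Qed.

End Infra.

Lemma inord_eqE n a b : (a < n.+2)%N -> (b < n.+2)%N ->
  ((inord a : 'I_(n.+2)) == inord b) = (a == b).
Proof. by move=> ha hb; rewrite -val_eqE /= !inordK. Qed.

Lemma bracket_bv (R : realType) A n a b : (a < n.+2)%N -> (b < n.+2)%N ->
  bracket A (bv R n a) (bv R n b) = br R A n a b.
Proof.
move=> ha hb; apply/rowP => j.
have -> : j = inord j by rewrite inord_val.
have := bracket_cc A (bv R n a) (bv R n b) j; rewrite /cc => ->.
rewrite (@sum2_nat _ _ _ [:: (a,b)]) //=; last first.
- move=> i k; rewrite inE xpair_eqE => /nandP [] Hi.
    by rewrite /bv [delta_mx 0 (inord a) 0 i]mxE /= ordE // (negbTE Hi) !mul0r.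
  by rewrite /bv [delta_mx 0 (inord b) 0 k]mxE /= ordE // (negbTE Hi) mulr0 mul0r.
- by rewrite ha hb.
rewrite big_cons big_nil addr0 /bv !mxE /= !eqxx /= !mul1r !inordK //.
Qed.

Lemma bv_ord (R : realType) n (i : 'I_(n.+2)) : bv R n i = delta_mx 0 i.
Proof. by rewrite /bv inord_val. Qed.

Lemma bracket_suml (R : realType) A n (y x : 'rV[R[i]]_(n.+2)) :
  bracket A y x = \sum_(i < n.+2) y 0 i *: bracket A (bv R n i) x.
Proof.
rewrite {1}(row_sum_delta y); elim/big_rec2: _ => [|i v w _ IH].
  by rewrite /bracket big1 // => i _; rewrite big1 // => j _; rewrite mxE mul0r scale0r.
by rewrite bracket_linl IH bv_ord.
Qed.

Lemma bracket_sumr (R : realType) A n (y x : 'rV[R[i]]_(n.+2)) :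
  bracket A x y = \sum_(i < n.+2) y 0 i *: bracket A x (bv R n i).
Proof.
rewrite {1}(row_sum_delta y); elim/big_rec2: _ => [|i v w _ IH].
  by rewrite /bracket big1 // => i _; rewrite big1 // => j _; rewrite mxE mulr0 scale0r.
by rewrite bracket_linr IH bv_ord.
Qed.

Lemma der_cc (R : realType) A n (d : 'M[R[i]]_(n.+2)) : is_derivation A d -> forall a b k,
  (a < n.+2)%N -> (b < n.+2)%N ->
  cc (br R A n a b *m d) k = cc (bracket A (bv R n a *m d) (bv R n b)) k
                             + cc (bracket A (bv R n a) (bv R n b *m d)) k.
Proof. by move=> hd a b k ha hb; rewrite -bracket_bv // hd /cc mxE. Qed.

Lemma anti_cc (R : realType) A n (D : 'M[R[i]]_(n.+2)) : is_antiderivation A D -> forall a b k,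
  (a < n.+2)%N -> (b < n.+2)%N ->
  cc (br R A n a b *m D) k = cc (bracket A (bv R n a *m D) (bv R n b)) k
                             - cc (bracket A (bv R n b *m D) (bv R n a)) k.
Proof. by move=> hD a b k ha hb; rewrite -bracket_bv // hD /cc !mxE. Qed.

Lemma third_cc (R : realType) A n (d D : 'M[R[i]]_(n.+2)) :
  (forall x y, bracket A x (y *m d) = bracket A x (y *m D)) -> forall a b k,
  cc (bracket A (bv R n a) (bv R n b *m d)) k = cc (bracket A (bv R n a) (bv R n b *m D)) k.
Proof. by move=> h a b k; rewrite h. Qed.

Lemma cc_Zmul (R : realType) n s c k (M : 'M[R[i]]_(n.+2)) :
  cc ((s *: bv R n c) *m M) k = s * M (inord c) (inord k).
Proof. by rewrite -scalemxAl /cc mxE -mul_cc. Qed.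

Lemma cc_Nmul (R : realType) n c k (M : 'M[R[i]]_(n.+2)) :
  cc ((- bv R n c) *m M) k = - M (inord c) (inord k).
Proof. by rewrite mulNmx /cc mxE -mul_cc. Qed.

Lemma cc_0mul (R : realType) n k (M : 'M[R[i]]_(n.+2)) :
  cc ((0 : 'rV[R[i]]_(n.+2)) *m M) k = 0.
Proof. by rewrite mul0mx /cc mxE. Qed.

Lemma lin_from (K : comPzRingType) (P Q L R c : K) : L = R -> P - Q = c * (L - R) -> P = Q.
Proof. by move=> -> /eqP; rewrite subrr mulr0 subr_eq0 => /eqP. Qed.

Lemma lin_from' (K : comPzRingType) (L R : K) (E : L = R) (c : K) (P Q : K) :
  P - Q = c * (L - R) -> P = Q.
Proof. by move=> H; apply: lin_from E H. Qed.



Ltac eq_tac := repeat match goal with |- context[(?a == ?b :> nat)] =>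
   first [rewrite (_ : (a == b :> nat) = false); last by lia
         |rewrite (_ : (a == b :> nat) = true); last by lia] end.
Ltac bv_tac := repeat (rewrite inord_eqE; [|lia|lia]).
Ltac brtac := rewrite ?inordK; try lia; rewrite /br; repeat (case: ifP => ?; try (exfalso; lia));
  rewrite ?mxE ?oppr0 ?scaler0; bv_tac; eq_tac; rewrite /= ?inordK; try lia; rewrite /= ?mulr1n ?mulr0n ?mulr0 ?mulr1 ?oppr0; try done.

Ltac if_tac := repeat match goal with |- context[if ?c then _ else _] =>
   first [rewrite (_ : c = true); last by lia | rewrite (_ : c = false); last by lia] end.
Ltac s2 P := rewrite (@sum2_nat _ _ _ P);
  [| by rewrite /= ?inE ?xpair_eqE ?andbT; try lia | by rewrite /= ?andbT; try lia
   | move=> ? ? ; rewrite ?inE ?xpair_eqE /= => ?; (apply/eqP; rewrite mulf_eq0; apply/orP; right; apply/eqP); brtac];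
  rewrite ?big_cons big_nil /=; brtac.

Section F.
Variable R : realType.
Local Notation C := (R[i]).
Variable n : nat.
Hypothesis hn : (4 <= n)%N.
Local Notation V := 'rV[C]_(n.+2).
Local Notation cc := (@cc R n).

Definition FR (x y : V) k :=
  if k == 2%N then cc x 2 * cc y 1 - cc x 1 * cc y 2
  else if (3 <= k)%N then (if (4 <= k)%N then cc x k.-1 * cc y 2 else 0)
        + cc x k * (cc y 0 + (k%:R - 2) * cc y 1) else 0.

Lemma FR_ok x y k : (k < n.+2)%N -> cc (bracket RFn1 x y) k = FR x y k.
Proof.
move=> hk; rewrite bracket_cc /FR.
case: (ltngtP k 2) => [k2|k2|->].
- if_tac. s2 (@nil (nat*nat)).
- case: (ltngtP k 3) => [k3|k3|->].
  + lia.
  + if_tac. s2 [:: (k.-1,2); (k,0); (k,1)]%N.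
    rewrite natrB; [|lia]; rewrite /cc; ring.
  + if_tac. s2 [:: (3,0); (3,1)]%N.
    rewrite /cc; ring.
- s2 [:: (2,1); (1,2)]%N.
  rewrite /cc; ring.
Qed.

Definition isL1 (A : which_alg) := if A is Lie1 then true else false.
Definition FL (e : bool) (x y : V) k :=
  if k == 2%N then cc x 2 * cc y 1 - cc x 1 * cc y 2
  else if k == 3%N then cc x 3 * cc y 0 - (if e then 1 else 0) * cc x 0 * cc y 3
  else if k == 4%N then cc x 2 * cc y 2 + 2 * cc x 4 * cc y 1
  else if (5 <= k)%N then cc x k.-1 * cc y 2 + (k%:R - 2) * cc x k * cc y 1
  else 0.

Lemma FL_ok A x y k : A <> RFn1 -> (k < n.+2)%N -> cc (bracket A x y) k = FL (isL1 A) x y k.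
Proof.
move=> hA hk; rewrite bracket_cc /FL.
have [k5|k5] := leqP 5 k.
  if_tac. case: A hA => // _; s2 [:: (k.-1,2); (k,1)]%N;
    rewrite natrB; try lia; rewrite /cc; ring.
case: (ltngtP k 2) => [k2|k2|->].
- if_tac. case: A hA => // _; s2 (@nil (nat*nat)).
- case: (ltngtP k 3) => [k3|k3|->].
  + lia.
  + if_tac. case: A hA => // _; s2 [:: (2,2); (4,1)]%N; rewrite ?natrB; try lia; rewrite /cc; ring.
  + case: A hA => // _; s2 [:: (3,0); (0,3)]%N; rewrite /cc; ring.
- case: A hA => // _; s2 [:: (2,1); (1,2)]%N; rewrite /cc; ring.
Qed.


Definition brL (e : bool) (a b : nat) : 'rV[C]_(n.+2) :=
      if (a == 2)%N && (b == 2)%N then bv R n 4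
      else if (4 <= a <= n)%N && (b == 2)%N then bv R n a.+1
      else if (a == 2)%N && (b == 1)%N then bv R n 2
      else if (a == 1)%N && (b == 2)%N then - bv R n 2
      else if (a == 3)%N && (b == 0)%N then bv R n 3
      else if (a == 0)%N && (b == 3)%N then
             (if e then - bv R n 3 else 0)
      else if (4 <= a <= n.+1)%N && (b == 1)%N
           then (a - 2)%:R *: bv R n a
      else 0.

Lemma brLE A a b : A <> RFn1 -> br R A n a b = brL (isL1 A) a b.
Proof. by case: A. Qed.

End F.



Ltac tac_simp := rewrite ?FR_ok; try lia; rewrite /FR /br; if_tac;
  repeat (case: ifP => ?; try (exfalso; lia));
  rewrite ?mul_cc ?cc_Zmul ?cc_Nmul ?cc_0mul;
  repeat (rewrite bv_cc; [|lia|lia]); eq_tac;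
  rewrite /= ?mulr1n ?mulr0n ?mulr0 ?mul0r ?mulr1 ?mul1r ?addr0 ?add0r ?subr0 ?oppr0.

Section RF.
Variable R : realType.
Local Notation C := (R[i]).
Variable n : nat.
Hypothesis hn : (4 <= n)%N.
Variables d D : 'M[C]_(n.+2).
Hypothesis hd : is_derivation RFn1 d.
Hypothesis hD : is_antiderivation RFn1 D.
Hypothesis h3 : forall x y, bracket RFn1 x (y *m d) = bracket RFn1 x (y *m D).
Ltac getD a b k :=
  let ha := fresh "ha" in let hb := fresh "hb" in
  (assert (ha : (a < n.+2)%N) by lia); (assert (hb : (b < n.+2)%N) by lia);
  move: (der_cc (a:=a) (b:=b) hd k ha hb); clear ha hb.
Ltac getA a b k :=
  let ha := fresh "ha" in let hb := fresh "hb" in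
  (assert (ha : (a < n.+2)%N) by lia); (assert (hb : (b < n.+2)%N) by lia);
  move: (anti_cc (a:=a) (b:=b) hD k ha hb); clear ha hb.
Ltac getT a b k := move: (third_cc h3 a b k).
Ltac lin_p := let E := fresh "E" in move=> E; apply: (@lin_from' C _ _ E 1); rewrite ?natrB; try lia; ring.
Ltac lin_m := let E := fresh "E" in move=> E; apply: (@lin_from' C _ _ E (-1)); rewrite ?natrB; try lia; ring.

Local Notation dd i j := (d (inord i) (inord j)).
Local Notation DD i j := (D (inord i) (inord j)).

Lemma R1 p k : (3 <= p <= n.+1)%N -> (k < 3)%N -> dd p k = 0.
Proof.
move=> hp hk; (getD p 0%N k); tac_simp.
all: lin_p.
Qed.

Lemma R2a : dd 0 0 + dd 0 1 = 0.
Proof.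
idtac; (getD 3%N 0%N 3%N); tac_simp.
all: lin_m.
Qed.

Lemma R2b : dd 0 0 + 2 * dd 0 1 = 0.
Proof.
idtac; (getD 4%N 0%N 4%N); tac_simp.
all: lin_m.
Qed.

Lemma R3 : dd 0 2 = 0.
Proof.
idtac; (getD 3%N 0%N 4%N); tac_simp.
all: lin_m.
Qed.

Lemma R4 k : (3 <= k <= n.+1)%N -> dd 0 k = 0.
Proof.
move=> hk; (getD 0%N 0%N k); tac_simp.
all: lin_m.
Qed.

Lemma R5 k : (3 <= k <= n.+1)%N -> dd 1 k = 0.
Proof.
move=> hk; (getD 1%N 0%N k); tac_simp.
all: lin_m.
Qed.

Lemma R6 k : (3 <= k <= n.+1)%N -> dd 2 k = 0.
Proof.
move=> hk; (getD 2%N 0%N k); tac_simp.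
all: lin_m.
Qed.

Lemma R7a : dd 2 0 = 0.
Proof.
idtac; (getD 2%N 1%N 0%N); tac_simp.
all: lin_p.
Qed.

Lemma R7b : dd 2 1 = 0.
Proof.
idtac; (getD 2%N 1%N 1%N); tac_simp.
all: lin_p.
Qed.

Lemma R7c : dd 1 1 = 0.
Proof.
idtac; (getD 2%N 1%N 2%N); tac_simp.
all: lin_m.
Qed.

Lemma R8a : dd 1 0 + dd 1 1 = 0.
Proof.
idtac; (getD 3%N 1%N 3%N); tac_simp.
all: lin_m.
Qed.

Lemma R8b p : (3 <= p <= n)%N -> dd p p.+1 = - dd 1 2.
Proof.
move=> hp; (getD p 1%N p.+1); tac_simp.
all: lin_m.
Qed.

Lemma R8c p k : (3 <= p <= n.+1)%N -> (3 <= k <= n.+1)%N -> k != p -> k != p.+1 -> dd p k = 0.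
Proof.
move=> hp hk h1 h2; (getD p 1%N k); tac_simp.
all: move=> E; apply: (@lin_from' C _ _ E (p%:R - k%:R)^-1); rewrite natrB; try lia.
all: field; rewrite subr_eq0 eqr_nat; lia.
Qed.

Lemma R9 p : (3 <= p <= n)%N -> dd p.+1 p.+1 = dd p p + dd 2 2.
Proof.
move=> hp; (getD p 2%N p.+1); tac_simp.
all: lin_p.
Qed.

Lemma C1 b : (b < n.+2)%N -> DD b 1 = dd b 1.
Proof.
move=> hb; (getT 2%N b 2%N); tac_simp.
all: lin_m.
Qed.

Lemma C0 b : (b < n.+2)%N -> DD b 0 + DD b 1 = dd b 0 + dd b 1.
Proof.
move=> hb; (getT 3%N b 3%N); tac_simp.
all: lin_m.
Qed.

Lemma C2 b : (b < n.+2)%N -> DD b 2 = dd b 2.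
Proof.
move=> hb; (getT 3%N b 4%N); tac_simp.
all: lin_m.
Qed.

Lemma S1 p k : (3 <= p <= n.+1)%N -> (3 <= k <= n.+1)%N -> DD p k = 0.
Proof.
move=> hp hk; (getA 0%N p k); tac_simp.
all: lin_p.
Qed.

Lemma S2 k : (3 <= k <= n.+1)%N -> DD 1 k = (k%:R - 2) * DD 0 k.
Proof.
move=> hk; (getA 0%N 1%N k); tac_simp.
all: lin_p.
Qed.

Lemma S3 k : (4 <= k <= n.+1)%N -> DD 2 k = DD 0 k.-1.
Proof.
move=> hk; (getA 0%N 2%N k); tac_simp.
all: lin_p.
Qed.

Lemma S3b : DD 2 3 = 0.
Proof.
idtac; (getA 0%N 2%N 3%N); tac_simp.
all: lin_p.
Qed.


Lemma d01 : dd 0 1 = 0.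
Proof.
rewrite -[dd 0 1](_ : (dd 0 0 + 2 * dd 0 1) - (dd 0 0 + dd 0 1) = dd 0 1); last ring.
by rewrite R2a R2b subrr.
Qed.
Lemma d00 : dd 0 0 = 0.
Proof. by have := R2a; rewrite d01 addr0. Qed.
Lemma d10 : dd 1 0 = 0.
Proof. by have := R8a; rewrite R7c addr0. Qed.

Lemma Rdiag p : (3 <= p <= n.+1)%N -> dd p p = dd 3 3 + (p%:R - 3) * dd 2 2.
Proof.
elim: p => [|p IH] hp; first lia.
have [->|hp3] := eqVneq p 2%N; first by rewrite subrr mul0r addr0.
rewrite R9; last lia. rewrite IH; last lia. ring.
Qed.

Definition xv (j : nat) : C :=
  if j == 0%N then dd 2 2 - dd 3 3 else if j == 1%N then - dd 2 2
  else if j == 2%N then dd 1 2 else DD 0 j.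
Definition xr : 'rV[C]_(n.+2) := \row_(j < n.+2) xv j.
Lemma ccx j : (j < n.+2)%N -> cc xr j = xv j.
Proof. by move=> hj; rewrite /cc /xr mxE inordK. Qed.

Ltac fin := rewrite /FR; if_tac; rewrite ?ccx; try lia; repeat (rewrite bv_cc; [|lia|lia]);
  eq_tac; rewrite /xv; if_tac; rewrite /= ?mulr1n ?mulr0n ?mulr0 ?mul0r ?mulr1 ?mul1r ?addr0 ?add0r ?subr0 ?oppr0;
  repeat (case: ifP => ?; try (exfalso; lia)); eq_tac; rewrite ?mulr0 ?mul0r ?mul1r ?oppr0 ?opprK ?addr0 ?add0r //.

Lemma RF_d i k : (i < n.+2)%N -> (k < n.+2)%N -> dd i k = - FR (bv R n i) xr k.
Proof.
move=> hi hk.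
have [i3|i3] := ltnP i 3.
{ case: i i3 hi => [|[|[|i]]] // _ hi; case: k hk => [|[|[|k]]] hk; fin.
  all: first [ exact: d00 | exact: d01 | exact: R3 | exact: d10 | exact: R7c | exact: R7a | exact: R7b
             | apply: R4; lia | apply: R5; lia | apply: R6; lia ]. }
have [k3|k3] := ltnP k 3.
  by rewrite R1; try lia; fin.
have [->|kni] := eqVneq k i.
  by rewrite Rdiag; try lia; fin; ring.
have [ek|kni1] := eqVneq k i.+1.
  by subst k; rewrite R8b; try lia; fin.
by rewrite R8c; try lia; fin.
Qed.


Lemma DDd b k : (b < n.+2)%N -> (k < 3)%N -> DD b k = dd b k.
Proof.
move=> hb; case: k => [|[|[|]]] // _; last by rewrite C2.
  by have := C0 hb; rewrite !C1 // => /addIr.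
by rewrite C1.
Qed.

Lemma RF_D i k : (i < n.+2)%N -> (k < n.+2)%N -> DD i k = FR xr (bv R n i) k.
Proof.
move=> hi hk.
have [k3|k3] := ltnP k 3.
  rewrite DDd // RF_d //.
  case: k k3 hk => [|[|[|]]] // _ hk; rewrite /FR /=; if_tac; rewrite ?ccx; try lia;
  repeat (rewrite bv_cc; [|lia|lia]); ring.
case: i hi => [|[|[|i]]] hi.
- by fin; rewrite mulr1.
- by rewrite S2; try lia; fin; ring.
- have [e3|k4] := eqVneq k 3%N.
    by subst k; rewrite S3b; fin.
  by rewrite S3; try lia; fin.
- by rewrite S1; try lia; fin.
Qed.


Lemma RF_main : is_inner_biderivation RFn1 d D.
Proof.
exists xr => y; split.
- rewrite mulmx_sum_row bracket_suml -sumrN; apply eq_bigr => i _.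
  rewrite -scalerN; congr (_ *: _); apply/rowP => j; rewrite !mxE.
  have := RF_d (ltn_ord i) (ltn_ord j); rewrite -FR_ok // /cc !inord_val => ->.
  by [].
- rewrite mulmx_sum_row bracket_sumr; apply eq_bigr => i _.
  congr (_ *: _); apply/rowP => j; rewrite !mxE.
  by have := RF_D (ltn_ord i) (ltn_ord j); rewrite -FR_ok // /cc !inord_val => ->.
Qed.

End RF.



Section Lie.
Variable R : realType.
Local Notation C := (R[i]).
Variable n : nat.
Hypothesis hn : (4 <= n)%N.
Variable A : which_alg.
Hypothesis hA : A <> RFn1.
Variables d D : 'M[C]_(n.+2).
Hypothesis hd : is_derivation A d.
Hypothesis hD : is_antiderivation A D.
Hypothesis h3 : forall x y, bracket A x (y *m d) = bracket A x (y *m D).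

Ltac tac_simpL := rewrite ?FL_ok; try (first [lia | exact hA]); rewrite /FL ?brLE; try exact hA; rewrite /brL; if_tac;
  repeat (case: ifP => ?; try (exfalso; lia));
  repeat match goal with H : is_true (?x == ?y) |- _ => is_var x; move/eqP: H => H; subst x end;
  rewrite ?mul_cc ?cc_Zmul ?cc_Nmul ?cc_0mul;
  repeat (rewrite bv_cc; [|lia|lia]); eq_tac;
  rewrite /= ?mulr1n ?mulr0n ?mulr0 ?mul0r ?mulr1 ?mul1r ?addr0 ?add0r ?subr0 ?oppr0.
Ltac getD a b k :=
  let ha := fresh "ha" in let hb := fresh "hb" in
  (assert (ha : (a < n.+2)%N) by lia); (assert (hb : (b < n.+2)%N) by lia);
  move: (der_cc (a:=a) (b:=b) hd k ha hb); clear ha hb.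
Ltac getA a b k :=
  let ha := fresh "ha" in let hb := fresh "hb" in
  (assert (ha : (a < n.+2)%N) by lia); (assert (hb : (b < n.+2)%N) by lia);
  move: (anti_cc (a:=a) (b:=b) hD k ha hb); clear ha hb.
Ltac getT a b k := move: (third_cc h3 a b k).
Ltac lin_p := let E := fresh "E" in move=> E; apply: (@lin_from' C _ _ E 1); rewrite ?natrB; try lia; ring.
Ltac lin_m := let E := fresh "E" in move=> E; apply: (@lin_from' C _ _ E (-1)); rewrite ?natrB; try lia; ring.
Ltac lin_c c := let E := fresh "E" in move=> E; apply: (@lin_from' C _ _ E c); rewrite ?natrB; try lia;
  field; rewrite ?subr_eq0 ?eqr_nat ?pnatr_eq0 ?oppr_eq0; lia.
Ltac fld := field; try done; rewrite ?subr_eq0 -?natrD ?eqr_nat ?pnatr_eq0; lia.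
Local Notation dd i j := (d (inord i) (inord j)).
Local Notation DD i j := (D (inord i) (inord j)).
Lemma L1 k : (k < n.+2)%N -> k != 3%N -> dd 3 k = 0.
Proof.
move=> hk h; (getD 3%N 0%N k); tac_simpL.
all: lin_p.
Qed.

Lemma L1b : dd 0 0 = 0.
Proof.
idtac; (getD 3%N 0%N 3%N); tac_simpL.
all: lin_m.
Qed.

Lemma L2 : isL1 A = false -> dd 0 3 = 0.
Proof.
move=> hl; (getD 0%N 0%N 3%N); tac_simpL.
all: lin_m.
Qed.

Lemma L3a p k : (4 <= p <= n.+1)%N -> (k < 4)%N -> dd p k = 0.
Proof.
move=> hp hk; (getD p 1%N k); tac_simpL.
all: first [lin_c ((p%:R - 3 : C)^-1) | lin_c ((p%:R - 2 : C)^-1)].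
Qed.

Lemma L3b p : (4 <= p <= n)%N -> dd p p.+1 = - dd 1 2.
Proof.
move=> hp; (getD p 1%N p.+1); tac_simpL.
all: lin_m.
Qed.

Lemma L3c p k : (4 <= p <= n.+1)%N -> (4 <= k <= n.+1)%N -> k != p -> k != p.+1 -> dd p k = 0.
Proof.
move=> hp hk h1 h2; (getD p 1%N k); tac_simpL.
all: first [lin_c ((p%:R - 4 : C)^-1) | lin_c ((p%:R - k%:R : C)^-1)].
Qed.

Lemma L4 : dd 1 1 = 0.
Proof.
idtac; (getD 4%N 1%N 4%N); tac_simpL.
all: lin_c (- 2^-1 : C).
Qed.

Lemma L5a k : (k < 4)%N -> k != 2%N -> dd 2 k = 0.
Proof.
move=> hk h; (getD 2%N 1%N k); tac_simpL.
all: lin_p.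
Qed.

Lemma L5b : dd 2 4 = - dd 1 2.
Proof.
idtac; (getD 2%N 1%N 4%N); tac_simpL.
all: lin_m.
Qed.

Lemma L5c k : (5 <= k <= n.+1)%N -> dd 2 k = 0.
Proof.
move=> hk; (getD 2%N 1%N k); tac_simpL.
all: lin_c ((3 - k%:R : C)^-1).
Qed.

Lemma L6a : dd 0 2 = 0.
Proof.
idtac; (getD 0%N 1%N 2%N); tac_simpL.
all: lin_m.
Qed.

Lemma L6b k : (4 <= k <= n.+1)%N -> dd 0 k = 0.
Proof.
move=> hk; (getD 0%N 1%N k); tac_simpL.
all: first [lin_c (- 2^-1 : C) | lin_c (- (k%:R - 2 : C)^-1)].
Qed.

Lemma L7 : dd 0 1 = 0.
Proof.
idtac; (getD 0%N 2%N 2%N); tac_simpL.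
all: lin_p.
Qed.

Lemma L8 : dd 1 0 = 0.
Proof.
idtac; (getD 3%N 1%N 3%N); tac_simpL.
all: lin_m.
Qed.

Lemma L9 : dd 1 3 = 0.
Proof.
idtac; (getD 1%N 0%N 3%N); tac_simpL.
all: lin_m.
Qed.

Lemma L10 k : (4 <= k <= n.+1)%N -> dd 1 k = 0.
Proof.
move=> hk; (getD 1%N 1%N k); tac_simpL.
all: first [lin_c (- 2^-1 : C) | lin_c (- (k%:R - 2 : C)^-1)].
Qed.

Lemma L12 : dd 4 4 = 2 * dd 2 2.
Proof.
idtac; (getD 2%N 2%N 4%N); tac_simpL.
all: lin_p.
Qed.

Lemma L13 p : (4 <= p <= n)%N -> dd p.+1 p.+1 = dd p p + dd 2 2.
Proof.
move=> hp; (getD p 2%N p.+1); tac_simpL.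
all: lin_p.
Qed.

Lemma LC1 b : (b < n.+2)%N -> DD b 1 = dd b 1.
Proof.
move=> hb; (getT 2%N b 2%N); tac_simpL.
all: lin_m.
Qed.

Lemma LC0 b : (b < n.+2)%N -> DD b 0 = dd b 0.
Proof.
move=> hb; (getT 3%N b 3%N); tac_simpL.
all: lin_m.
Qed.

Lemma LC2 b : (b < n.+2)%N -> DD b 2 = dd b 2.
Proof.
move=> hb; (getT 2%N b 4%N); tac_simpL.
all: lin_m.
Qed.

Lemma LC3 b : (b < n.+2)%N -> isL1 A = true -> DD b 3 = dd b 3.
Proof.
move=> hb hl; (getT 0%N b 3%N); tac_simpL.
all: lin_p.
Qed.

Lemma T1a p : (4 <= p <= n.+1)%N -> DD p 2 = 0.
Proof.
move=> hp; (getA 1%N p 2%N); tac_simpL.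
all: lin_p.
Qed.

Lemma T1b p k : (4 <= p <= n.+1)%N -> (4 <= k <= n.+1)%N -> DD p k = 0.
Proof.
move=> hp hk; (getA 1%N p k); tac_simpL.
all: first [lin_c (2^-1 : C) | lin_c ((k%:R - 2 : C)^-1)].
Qed.

Lemma T2 p : (4 <= p <= n.+1)%N -> DD p 3 = 0.
Proof.
move=> hp; (getA 0%N p 3%N); tac_simpL.
all: lin_p.
Qed.

Lemma T3 k : (4 <= k <= n.+1)%N -> DD 3 k = 0.
Proof.
move=> hk; (getA 1%N 3%N k); tac_simpL.
all: first [lin_c (2^-1 : C) | lin_c ((k%:R - 2 : C)^-1)].
Qed.

Lemma T4 : isL1 A = false -> DD 3 3 = 0.
Proof.
move=> hl; (getA 0%N 3%N 3%N); tac_simpL.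
all: lin_p.
Qed.

Lemma T5a k : (4 <= k <= n.+1)%N -> DD 0 k = 0.
Proof.
move=> hk; (getA 0%N 1%N k); tac_simpL.
all: first [lin_c (- 2^-1 : C) | lin_c (- (k%:R - 2 : C)^-1)].
Qed.

Lemma T5b : DD 1 3 = 0.
Proof.
idtac; (getA 0%N 1%N 3%N); tac_simpL.
all: lin_p.
Qed.

Lemma T6a : DD 2 3 = 0.
Proof.
idtac; (getA 1%N 2%N 3%N); tac_simpL.
all: lin_m.
Qed.

Lemma T6b : DD 2 4 = DD 1 2.
Proof.
idtac; (getA 1%N 2%N 4%N); tac_simpL.
all: lin_p.
Qed.

Lemma T6c k : (5 <= k <= n.+1)%N -> (k%:R - 3) * DD 2 k = DD 1 k.-1.
Proof.
move=> hk; (getA 1%N 2%N k); tac_simpL.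
all: lin_p.
Qed.


Lemma Ldiag p : (4 <= p <= n.+1)%N -> dd p p = (p%:R - 2) * dd 2 2.
Proof.
elim: p => [|p IH] hp; first lia.
have [->|hp3] := eqVneq p 3%N; first by rewrite L12; ring.
rewrite L13; last lia. rewrite IH; last lia. ring.
Qed.

Lemma T6d k : (5 <= k <= n.+1)%N -> DD 2 k = DD 1 k.-1 / (k%:R - 3).
Proof.
move=> hk; have := T6c hk => E; apply: (@lin_from' C _ _ E ((k%:R - 3)^-1)).
field; rewrite subr_eq0 eqr_nat; lia.
Qed.

Definition xvL (j : nat) : C :=
  if j == 0%N then - dd 3 3 else if j == 1%N then - dd 2 2
  else if j == 2%N then dd 1 2 else if j == 3%N then DD 0 3 else DD 1 j / (j%:R - 2).
Definition xrL : 'rV[C]_(n.+2) := \row_(j < n.+2) xvL j.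
Lemma ccxL j : (j < n.+2)%N -> cc xrL j = xvL j.
Proof. by move=> hj; rewrite /cc /xrL mxE inordK. Qed.

Ltac fin := rewrite /FL; if_tac; rewrite ?ccxL; try lia; repeat (rewrite bv_cc; [|lia|lia]);
  eq_tac; rewrite /xvL; if_tac; rewrite /= ?mulr1n ?mulr0n ?mulr0 ?mul0r ?mulr1 ?mul1r ?addr0 ?add0r ?subr0 ?oppr0;
  repeat (case: ifP => ?; try (exfalso; lia));
  repeat match goal with H : is_true (?x == ?y) |- _ => is_var x; move/eqP: H => H; subst x end;
  eq_tac; rewrite ?mulr0 ?mul0r ?mul1r ?mulr1 ?oppr0 ?opprK ?addr0 ?add0r ?subr0 //.

Lemma Lie_d i k : (i < n.+2)%N -> (k < n.+2)%N -> dd i k = - FL (isL1 A) (bv R n i) xrL k.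
Proof.
move=> hi hk.
have [i4|i4] := ltnP i 4.
{ case: i i4 hi => [|[|[|[|i]]]] // _ hi.
  { case: k hk => [|[|[|[|k]]]] hk; fin.
    all: first [ exact: L1b | exact: L7 | exact: L6a | (by rewrite LC3) | (by apply: L2) | (apply: L6b; lia) ]. }
  { case: k hk => [|[|[|[|k]]]] hk; fin.
    all: first [ exact: L8 | exact: L4 | exact: L9 | (apply: L10; lia) ]. }
  { case: k hk => [|[|[|[|[|k]]]]] hk; fin.
    all: first [ (by apply: L5a) | exact: L5b | (apply: L5c; lia) ]. }
  have [e3|k3] := eqVneq k 3%N.
    by subst k; fin.
  by rewrite L1 //; fin. }
have [k4|k4] := ltnP k 4.
  by rewrite L3a; try lia; fin.
have [->|kni] := eqVneq k i.
  by rewrite Ldiag; try lia; fin; ring.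
have [ek|kni1] := eqVneq k i.+1.
  by subst k; rewrite L3b; try lia; fin.
by rewrite L3c; try lia; fin.
Qed.


Lemma DDdL b k : (b < n.+2)%N -> (k < 3)%N -> DD b k = dd b k.
Proof.
move=> hb; case: k => [|[|[|]]] // _; first by rewrite LC0.
  by rewrite LC1.
by rewrite LC2.
Qed.

Lemma Lie_D i k : (i < n.+2)%N -> (k < n.+2)%N -> DD i k = FL (isL1 A) xrL (bv R n i) k.
Proof.
move=> hi hk.
have [k3|k3] := ltnP k 3.
  rewrite DDdL // Lie_d //.
  case: k k3 hk => [|[|[|]]] // _ hk; rewrite /FL /=; if_tac; rewrite ?ccxL; try lia;
  repeat (rewrite bv_cc; [|lia|lia]); ring.
case: i hi => [|[|[|[|i]]]] hi.
{ case: k k3 hk => [|[|[|[|k]]]] // _ hk; fin; apply: T5a; lia. }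
{ case: k k3 hk => [|[|[|[|[|k]]]]] // _ hk; fin.
  - exact: T5b.
  - fld.
  fld. }
{ case: k k3 hk => [|[|[|[|[|k]]]]] // _ hk; fin.
  - exact: T6a.
  - by rewrite T6b LC2.
  rewrite T6d /=; last lia.
  fld. }
{ case: k k3 hk => [|[|[|[|k]]]] // _ hk; fin.
  all: first [ (by rewrite LC3) | (by apply: T4) | (apply: T3; lia) ]. }
have [e3|k4] := eqVneq k 3%N.
  by subst k; rewrite T2; try lia; fin.
by rewrite T1b; try lia; fin.
Qed.

Lemma Lie_main : is_inner_biderivation A d D.
Proof.
exists xrL => y; split.
- rewrite mulmx_sum_row bracket_suml -sumrN; apply eq_bigr => i _.
  rewrite -scalerN; congr (_ *: _); apply/rowP => j; rewrite !mxE.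
  have := Lie_d (ltn_ord i) (ltn_ord j); rewrite -FL_ok // /cc !inord_val => ->.
  by [].
- rewrite mulmx_sum_row bracket_sumr; apply eq_bigr => i _.
  congr (_ *: _); apply/rowP => j; rewrite !mxE.
  by have := Lie_D (ltn_ord i) (ltn_ord j); rewrite -FL_ok // /cc !inord_val => ->.
Qed.

End Lie.


Unset Implicit Arguments.

Theorem mainTheorem14 (R : realType) (A : which_alg) (n : nat) (hn : (4 <= n)%N)
  (d D : 'M[R[i]]_(n.+2)) :
  is_biderivation A d D -> is_inner_biderivation A d D.
Proof.
case=> hd hD h3.
case: A hd hD h3 => hd hD h3.
- exact: (RF_main hn hd hD h3).
- by apply: (Lie_main hn _ hd hD h3).
- by apply: (Lie_main hn _ hd hD h3).
Qed.
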